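(* For every $\mathbf b_j\in\mathcal B_k$, \[F^{(\mathbf b_j)}_{\mathbf b_i}(\lambda)=\lambda^{s_0^{(j)}}\sum_{s=0}^\infty\frac{\prod_{r=1}^m\prod_{\sigma=0}^{\ell_r-1}\big(\frac{v^{(i)}_r+\sigma}{\ell_r}+\frac{s_0^{(j)}}{\ell_0}\big)_s}{\prod_{t=1}^{\ell_0}\big(\frac{t}{\ell_0}+\frac{s_0^{(j)}}{\ell_0}\big)_s}\lambda^{s\ell_0};\] that is, $F^{(\mathbf b_j)}_{\mathbf b_i}(\lambda)$ is obtained from the series $F^{(\mathbf b_i)}_{\mathbf b_i}(\lambda)=\sum_{s\ge0}\frac{\prod_r\prod_\sigma((v^{(i)}_r+\sigma)/\ell_r)_s}{\prod_{t=1}^{\ell_0}(t/\ell_0)_s}\lambda^{s\ell_0}$ by multiplying by $\lambda^{s_0^{(j)}}$ and adding $s_0^{(j)}/\ell_0$ to each Pochhammer parameter. In particular $\frac{v^{(i)}_r}{\ell_r}+\frac{s_0^{(j)}}{\ell_0}=\frac{v^{(j)}_r-s^{(j)}_r}{\ell_r}$ for $r=1,\dots,m$.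
   Context: Let $A=\{\mathbf a_1,\dots,\mathbf a_m\}\subseteq\mathbb Z^n$ be linearly independent over $\mathbb R$, $\mathbf a_0\in\mathbb Z^n$, and $\ell_0,\dots,\ell_m$ positive integers with gcd $1$, $\ell_0\mathbf a_0=\sum_{j=1}^m\ell_j\mathbf a_j$, $\ell_0=\sum_{j=1}^m\ell_j$. Let $\mathbb ZA$, $\mathbb ZA_+$ be the groups generated by $A$ and $A\cup\{\mathbf a_0\}$. Let $V$ be the real span of $A$, $V_{\mathbb Z}=V\cap\mathbb Z^n$, $P(A)=\{\sum_jc_j\mathbf a_j:0\le c_j<1\}$, $\mathcal B=V_{\mathbb Z}\cap P(A)$. Fix a coset $\mathcal C_k$ of $\mathbb ZA_+$ in $V_{\mathbb Z}$ and put $\mathcal B_k=\mathcal B\cap\mathcal C_k$. Fix $\mathbf b_i\in\mathcal B_k$. For $\mathbf b_j\in\mathcal B_k$ write $\mathbf b_j=\sum_rv^{(j)}_r\mathbf a_r$ with $v^{(j)}_r\in[0,1)$, let $s_0^{(j)}\in\{0,\dots,\ell_0-1\}$ be the unique element with $\mathbf b_i+s_0^{(j)}\mathbf a_0\equiv\mathbf b_j\pmod{\mathbb ZA}$, and let $s^{(j)}_r\in\mathbb Z$ be determined by $\mathbf b_i+s_0^{(j)}\mathbf a_0=\mathbf b_j-\sum_rs^{(j)}_r\mathbf a_r$ (so $s^{(i)}_r=0$ for $r=0,\dots,m$). Define \[F^{(\mathbf b_j)}_{\mathbf b_i}(\lambda)=\lambda^{s_0^{(j)}}\sum_{s=0}^\infty\frac{\prod_{r=1}^m\prod_{\sigma=0}^{\ell_r-1}\big(\frac{v^{(j)}_r-s^{(j)}_r+\sigma}{\ell_r}\big)_s}{\prod_{t=1}^{\ell_0}\big(\frac{s^{(j)}_0+t}{\ell_0}\big)_s}\lambda^{s\ell_0},\]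 with $(a)_s=a(a+1)\cdots(a+s-1)$. *)

(* Defs.v *)
From HB Require Import structures.
From mathcomp Require Import all_boot all_order all_algebra.
From mathcomp Require Import reals.

Set Implicit Arguments.
Unset Strict Implicit.
Unset Printing Implicit Defensive.

Import Order.TTheory GRing.Theory Num.Theory.
Local Open Scope ring_scope.

(* Integer vectors of Z^n are rows 'rV[int]_n; the index r = 1..m of the
   paper is represented by 'I_m (r-th element is index r-1). *)

Definition toR (R : ringType) (n : nat) (x : 'rV[int]_n) : 'rV[R]_n :=
  map_mx (fun z : int => z%:~R) x.

Definition lin_indep (R : ringType) (n m : nat) (a : 'I_m -> 'rV[R]_n) :=
  forall c : 'I_m -> R, \sum_(r < m) c r *: a r = 0 -> forall r, c r = 0.

Definition in_span (R : ringType) (n m : nat) (a : 'I_m -> 'rV[R]_n)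
  (x : 'rV[R]_n) := exists c : 'I_m -> R, x = \sum_(r < m) c r *: a r.

Definition in_parallelepiped (R : realDomainType) (n m : nat)
  (a : 'I_m -> 'rV[R]_n) (x : 'rV[R]_n) :=
  exists c : 'I_m -> R, (forall r, 0 <= c r < 1) /\ x = \sum_(r < m) c r *: a r.

Definition in_ZAplus (n m : nat) (a0 : 'rV[int]_n) (a : 'I_m -> 'rV[int]_n)
  (x : 'rV[int]_n) :=
  exists (z0 : int) (z : 'I_m -> int), x = z0 *: a0 + \sum_(r < m) z r *: a r.

Definition poch (R : ringType) (a : R) (s : nat) : R :=
  \prod_(k < s) (a + k%:R).

(* Formal power series in lambda, represented by its coefficient sequence
   (N |-> coefficient of lambda^N).  [lam_series l0 e c] is the formal series
   lambda^e * \sum_{s >= 0} c s * lambda^(s * l0)  (for l0 > 0). *)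
Definition lam_series (R : ringType) (l0 e : nat) (c : nat -> R) : nat -> R :=
  fun N => if ((e <= N) && (l0 %| (N - e)))%N then c ((N - e) %/ l0)%N else 0.

(* Coefficient of lambda^(s0 + s l0) / lambda^s0 in F^{(b_j)}_{b_i}. *)
Definition F_coef (R : fieldType) (m : nat) (l : 'I_m -> nat) (l0 : nat)
  (v : 'I_m -> R) (sv : 'I_m -> int) (s0 : nat) (s : nat) : R :=
  (\prod_(r < m) \prod_(sigma < l r)
      poch ((v r - (sv r)%:~R + sigma%:R) / (l r)%:R) s)
  / (\prod_(t < l0) poch ((s0 + t.+1)%:R / l0%:R) s).

Definition F_series (R : fieldType) (m : nat) (l : 'I_m -> nat) (l0 : nat)
  (v : 'I_m -> R) (sv : 'I_m -> int) (s0 : nat) : nat -> R :=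
  lam_series l0 s0 (F_coef l l0 v sv s0).

(* Main.v *)
Require Import Defs.
From HB Require Import structures.
From mathcomp Require Import all_boot all_order all_algebra.
From mathcomp Require Import reals.
From mathcomp Require Import ring.
From Stdlib Require Import FunctionalExtensionality.
Import Order.TTheory GRing.Theory Num.Theory.
Local Open Scope ring_scope.

Lemma toRD (R : ringType) n (x y : 'rV[int]_n) : toR R (x + y) = toR R x + toR R y.
Proof. by apply/matrixP => i j; rewrite !mxE intrD. Qed.
Lemma toRN (R : ringType) n (x : 'rV[int]_n) : toR R (- x) = - toR R x.
Proof. by apply/matrixP => i j; rewrite !mxE intrN. Qed.
Lemma toR0 (R : ringType) n : toR R (0 : 'rV[int]_n) = 0.
Proof. by apply/matrixP => i j; rewrite !mxE. Qed.
Lemma toRZ (R : ringType) n z (x : 'rV[int]_n) : toR R (z *: x) = z%:~R *: toR R x.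
Proof. by apply/matrixP => i j; rewrite !mxE intrM. Qed.
Lemma toRsum (R : ringType) n m (F : 'I_m -> 'rV[int]_n) :
  toR R (\sum_(r < m) F r) = \sum_(r < m) toR R (F r).
Proof. exact: (big_morph _ (@toRD R n) (@toR0 R n)). Qed.

Theorem proposition6p9 (R : realType) (n m : nat)
    (a : 'I_m -> 'rV[int]_n) (a0 : 'rV[int]_n)
    (l : 'I_m -> nat) (l0 : nat)
    (c bi bj : 'rV[int]_n)
    (vi vj : 'I_m -> R) (s0 : nat) (sj : 'I_m -> int) :
  lin_indep (fun r => toR R (a r)) ->
  (0 < l0)%N -> (forall r, 0 < l r)%N ->
  gcdn l0 (\big[gcdn/0%N]_(r < m) l r) = 1%N ->
  l0%:Z *: a0 = \sum_(r < m) (l r)%:Z *: a r ->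
  l0 = (\sum_(r < m) l r)%N ->
  in_span (fun r => toR R (a r)) (toR R c) ->
  in_parallelepiped (fun r => toR R (a r)) (toR R bi) ->
  in_ZAplus a0 a (bi - c) ->
  in_parallelepiped (fun r => toR R (a r)) (toR R bj) ->
  in_ZAplus a0 a (bj - c) ->
  (forall r, 0 <= vi r < 1) -> toR R bi = \sum_(r < m) vi r *: toR R (a r) ->
  (forall r, 0 <= vj r < 1) -> toR R bj = \sum_(r < m) vj r *: toR R (a r) ->
  (s0 < l0)%N ->
  bi + s0%:Z *: a0 = bj - \sum_(r < m) sj r *: a r ->
  (forall r, vi r / (l r)%:R + s0%:R / l0%:R = (vj r - (sj r)%:~R) / (l r)%:R)
  /\
  F_series l l0 vj sj s0 =
  lam_series l0 s0 (fun s =>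
    (\prod_(r < m) \prod_(sigma < l r)
        poch ((vi r + sigma%:R) / (l r)%:R + s0%:R / l0%:R) s)
    / (\prod_(t < l0) poch (t.+1%:R / l0%:R + s0%:R / l0%:R) s)).
Proof.
move=> Hind l0p lp _ Ha0 _ _ _ _ _ _ _ Hbi _ Hbj _ Hb.
set A := fun r => toR R (a r).
have key : forall r, l0%:R * vi r + s0%:R * (l r)%:R
                     - l0%:R * (vj r - (sj r)%:~R) = 0 :> R.
  apply: Hind.
  have E : toR R (bi + s0%:Z *: a0 - (bj - \sum_(r < m) sj r *: a r)) = 0.
    by rewrite Hb subrr toR0.
  have Ea0 : toR R (l0%:Z *: a0) = \sum_(r < m) (l r)%:R *: A r.
    by rewrite Ha0 toRsum; apply: eq_bigr => r _; rewrite toRZ.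
  rewrite !(toRD, toRN) toRZ toRsum in E.
  rewrite toRZ /= in Ea0.
  under eq_bigr => r _ do rewrite scalerBl scalerDl -!scalerA.
  rewrite sumrB big_split /= -!scaler_sumr -Ea0 -Hbi.
  have -> : \sum_(i < m) (vj i - (sj i)%:~R) *: A i
      = toR R bj - \sum_(i < m) toR R (sj i *: a i).
    by rewrite Hbj -sumrB; apply: eq_bigr => r _; rewrite scalerBl toRZ.
  apply: (@eq_trans _ _ ((l0%:R : R) *: (toR R bi + s0%:~R *: toR R a0
     - (toR R bj - \sum_(r < m) toR R (sj r *: a r))))); last by rewrite E scaler0.
  by rewrite !(scalerDr, scalerN, scalerA) mulrC.
have part1 : forall r, vi r / (l r)%:R + s0%:R / l0%:R = (vj r - (sj r)%:~R) / (l r)%:R.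
  move=> r; have k := key r.
  have l0n : (l0%:R : R) != 0 by rewrite pnatr_eq0 -lt0n.
  have lrn : ((l r)%:R : R) != 0 by rewrite pnatr_eq0 -lt0n lp.
  apply/eqP; rewrite -subr_eq0; apply/eqP.
  have -> : vi r / (l r)%:R + s0%:R / l0%:R - (vj r - (sj r)%:~R) / (l r)%:R
     = (l0%:R * vi r + s0%:R * (l r)%:R - l0%:R * (vj r - (sj r)%:~R))
        / (l0%:R * (l r)%:R).
    by field; rewrite lrn l0n.
  by rewrite k mul0r.
split => //.
rewrite /F_series; congr lam_series; apply: functional_extensionality => s.
rewrite /F_coef; congr (_ / _).
  apply: eq_bigr => r _; apply: eq_bigr => sg _; congr poch.
  by rewrite mulrDl -part1 mulrDl addrAC.
apply: eq_bigr => t _; congr poch.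
by rewrite natrD mulrDl addrC.
Qed.
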